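(* Let $G$ be a triangle-free graph with $n$ vertices and $e$ edges, and let $P$ be a greedy partition of $G$ of size $r=r(P)$ (equivalently, the size-$2$ cliques of $P$ form a maximal matching of $G$ with $n-r$ edges). Then $e\le r(n-r)$.
   Context: A good partition $P$ of $V(G)$ is a partition of $V(G)$ into disjoint sets $C_1, \dots, C_r$, each inducing a complete subgraph of $G$, indexed so that $|C_1|\le\dots\le |C_r|$; its size is $r(P)=r$. It is a greedy partition if for every $i\ge1$ the set $C_1\cup\dots\cup C_i$ induces a subgraph with no complete subgraph on $|C_i|+1$ vertices. For triangle-free $G$ the cliques have size $1$ or $2$. *)

(* Defs.v *)
From mathcomp Require Import all_boot.
Set Implicit Arguments. Unset Strict Implicit. Unset Printing Implicit Defensive.

Definition simple_graph (T : finType) (g : rel T) : Prop :=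
  symmetric g /\ irreflexive g.

Definition triangle_free (T : finType) (g : rel T) : Prop :=
  forall x y z : T, ~ [&& g x y, g y z & g x z].

Definition is_clique (T : finType) (g : rel T) (A : {set T}) : bool :=
  [forall x in A, forall y in A, (x != y) ==> g x y].

Definition edges (T : finType) (g : rel T) : {set {set T}} :=
  [set A : {set T} | [exists x, exists y, g x y && (A == [set x; y])]].

Definition good_partition (T : finType) (g : rel T) (P : seq {set T}) : Prop :=
  [/\ uniq P, partition [set C : {set T} | C \in P] [set: T], all (fun C : {set T} => is_clique g C) P
    & sorted leq [seq #|C| | C : {set T} <- P]].

Definition greedy_partition (T : finType) (g : rel T) (P : seq {set T}) : Prop :=
  good_partition g P /\
  forall i, i < size P ->
    forall K : {set T},
      K \subset \bigcup_(C <- take i.+1 P) C ->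
      is_clique g K -> #|K| != #|nth set0 P i|.+1.

(* Main.v *)
Require Import Defs.
From mathcomp Require Import all_boot.
From mathcomp Require Import zify.

Lemma clique_nbr (T : finType) (g : rel T) (C : {set T}) (x : T) :
  symmetric g -> triangle_free g -> is_clique g C ->
  #|[set z in C | g x z]| <= 1.
Proof.
move=> sg tf cl; rewrite leqNgt; apply/negP => /card_gt1P [u [v [Hu Hv Huv]]].
move: Hu Hv; rewrite !inE => /andP [uC gxu] /andP [vC gxv].
have guv : g u v by move/forallP: cl => /(_ u); rewrite uC /= => /forallP /(_ v); rewrite vC Huv.
by apply: (tf x u v); rewrite gxu guv gxv.
Qed.

Lemma clique_sum (T : finType) (g : rel T) (C : {set T}) (x : T) :
  symmetric g -> triangle_free g -> is_clique g C ->
  \sum_(z in C) (g x z : nat) <= 1.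
Proof.
move=> sg tf cl; rewrite (bigID (g x)) /= [X in _ + X]big1; last by move=> i /andP [_ /negbTE ->].
rewrite addn0 (eq_bigr (fun _ => 1)); last by move=> i /andP [_ ->].
by rewrite sum1dep_card; apply: clique_nbr.
Qed.

Lemma clique_size (T : finType) (g : rel T) (C : {set T}) :
  symmetric g -> irreflexive g -> triangle_free g -> is_clique g C ->
  #|C| <= 2.
Proof.
move=> sg ig tf cl; have [x xC|C0] := pickP (mem C); last first.
  by rewrite (eq_card0 C0).
have xC' : x \in C by []. rewrite (cardsD1 x) xC' add1n ltnS; apply: leq_trans (@clique_nbr _ _ _ x sg tf cl).
apply: subset_leq_card; apply/subsetP => z; rewrite !inE => /andP [zx zC].
rewrite zC /=; move/forallP: cl => /(_ x); rewrite xC' /= => /forallP /(_ z).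
by rewrite zC eq_sym zx.
Qed.

Lemma part_sum (T : finType) (P : seq {set T}) (F : T -> nat) :
  uniq P -> partition [set C : {set T} | C \in P] [set: T] ->
  \sum_x F x = \sum_(C <- P) \sum_(x in C) F x.
Proof.
move=> uP /and3P [/eqP cov triv _].
rewrite [RHS]big_uniq //=.
transitivity (\sum_(C in [set C : {set T} | C \in P]) \sum_(x in C) F x); last first.
  by apply: eq_bigl => C; rewrite inE.
rewrite -(big_trivIset _ triv) cov; apply: eq_bigl => x; by rewrite inE.
Qed.

Lemma sum_bool_card (T : finType) (p : pred T) :
  \sum_x (p x : nat) = #|[set x | p x]|.
Proof.
rewrite -sum1dep_card [RHS]big_mkcond /=; apply: eq_bigr => x _; by case: (p x).
Qed.

Lemma edges_bound (T : finType) (g : rel T) :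
  simple_graph g -> 2 * #|edges g| <= \sum_x \sum_y (g x y : nat).
Proof.
move=> [sg ig].
pose D1 := [set p : T * T | g p.1 p.2 && (enum_rank p.1 < enum_rank p.2)].
pose D2 := [set p : T * T | g p.1 p.2 && (enum_rank p.2 < enum_rank p.1)].
pose f := fun p : T * T => [set p.1; p.2].
have sub1 : forall A, A \in edges g -> exists x y, [/\ g x y, enum_rank x < enum_rank y &
     (A == [set x; y]) && (A == [set y; x])].
  move=> A; rewrite inE => /existsP [x /existsP [y /andP [gxy /eqP ->]]].
  have xy : enum_rank x != enum_rank y.
    apply/negP => /eqP /enum_rank_inj exy; by move: gxy; rewrite exy ig.
  rewrite setUC.
  case: (ltngtP (enum_rank x) (enum_rank y)) => [lt|lt|eq]; last by move: xy; rewrite -val_eqE /= eq eqxx.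
    by exists x, y; rewrite gxy lt setUC !eqxx.
  by exists y, x; rewrite sg gxy lt setUC !eqxx.
have e1 : #|edges g| <= #|D1|.
  apply: leq_trans (leq_imset_card f D1); apply: subset_leq_card; apply/subsetP => A /sub1.
  move=> [x [y [gxy lt /andP [/eqP -> _]]]].
  by apply/imsetP; exists (x, y); rewrite // inE /= gxy lt.
have e2 : #|edges g| <= #|D2|.
  apply: leq_trans (leq_imset_card f D2); apply: subset_leq_card; apply/subsetP => A /sub1.
  move=> [x [y [gxy lt /andP [_ /eqP ->]]]].
  by apply/imsetP; exists (y, x); rewrite // inE /= sg gxy lt.
have dis : D1 :&: D2 = set0.
  apply/setP => p; rewrite !inE; apply/negP => /andP [/andP [_ l1] /andP [_ l2]].
  by move: (ltn_trans l1 l2); rewrite ltnn.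
have : #|D1 :|: D2| <= #|[set p : T * T | g p.1 p.2]|.
  apply: subset_leq_card; apply/subsetP => p; rewrite !inE.
  by case/orP => /andP [->].
rewrite cardsU dis cards0 subn0 => H.
have E := @sum_bool_card _ (fun p : T * T => g p.1 p.2).
rewrite pair_big /= E.
apply: leq_trans H; rewrite mul2n -addnn; exact: leq_add.
Qed.

Lemma sub_bigcup (T : finType) (s : seq {set T}) (C : {set T}) :
  C \in s -> C \subset \bigcup_(D <- s) D.
Proof.
elim: s => [//|D s IH]; rewrite inE big_cons => /orP [/eqP ->|/IH H].
  exact: subsetUl.
by apply: subset_trans H _; apply: subsetUr.
Qed.

Lemma greedy_single (T : finType) (g : rel T) (P : seq {set T}) (C D : {set T}) (x z : T) :
  simple_graph g -> greedy_partition g P -> C \in P -> D \in P ->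
  #|C| = 1 -> #|D| = 1 -> x \in C -> z \in D -> g x z = false.
Proof.
move=> [sg ig] [_ gr] CP DP c1 d1 xC zD; apply/negP => gxz.
pose i := index C P; pose j := index D P; pose k := maxn i j.
have iP : i < size P by rewrite index_mem.
have jP : j < size P by rewrite index_mem.
have kP : k < size P by rewrite gtn_max iP jP.
have nk : #|nth set0 P k| = 1.
  case: (leqP i j) => h.
    have -> : k = j by apply/maxn_idPr.
    by rewrite nth_index.
  have -> : k = i by apply/maxn_idPl; apply: ltnW.
  by rewrite nth_index.
have inT : forall l, l <= k -> nth set0 P l \in take k.+1 P.
  move=> l lk; rewrite -(nth_take set0 (n0 := k.+1)) //; apply: mem_nth.
  by rewrite size_take; case: ifP => // _; apply: leq_ltn_trans kP.
have xz : x != z by apply/negP => /eqP exz; move: gxz; rewrite exz ig.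
have Hc : is_clique g [set x; z].
  apply/forallP => a; apply/implyP; rewrite in_set2 => /orP [] /eqP ->;
  apply/forallP => b; apply/implyP; rewrite in_set2 => /orP [] /eqP ->;
  by rewrite ?eqxx //= ?(sg z x) ?gxz ?implybT.
have Hs : [set x; z] \subset \bigcup_(C <- take k.+1 P) C.
  apply/subsetP => w; rewrite in_set2 => /orP [] /eqP ->.
    apply: (subsetP (@sub_bigcup _ _ _ (inT i (leq_maxl _ _)))).
    by rewrite nth_index.
  apply: (subsetP (@sub_bigcup _ _ _ (inT j (leq_maxr _ _)))).
  by rewrite nth_index.
by move: (gr k kP _ Hs Hc); rewrite nk cards2 xz.
Qed.

Lemma count12 (T : finType) (s : seq {set T}) (u v : nat) :
  all (fun C : {set T} => (#|C| == 1) || (#|C| == 2)) s ->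
  [/\ size s = count (fun C : {set T} => #|C| == 1) s + count (fun C : {set T} => #|C| == 2) s,
      \sum_(C <- s) #|C| = count (fun C : {set T} => #|C| == 1) s + 2 * count (fun C : {set T} => #|C| == 2) s,
      \sum_(C <- s) (if #|C| == 1 then u else v) =
        count (fun C : {set T} => #|C| == 1) s * u + count (fun C : {set T} => #|C| == 2) s * v
    & \sum_(C <- s) ((#|C| == 2) : nat) = count (fun C : {set T} => #|C| == 2) s].
Proof.
elim: s => [|C s IH] /=; first by rewrite !big_nil.
case/andP => /orP [] /eqP c /IH [h1 h2 h3 h4]; rewrite !big_cons c h1 h2 h3 h4 /=;
split; lia.
Qed.

Theorem claim7 (T : finType) (g : rel T) (P : seq {set T}) :
  simple_graph g -> triangle_free g -> greedy_partition g P ->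
  #|edges g| <= size P * (#|T| - size P).
Proof.
move=> sim tf gp; have [[uP part cl srt] gr] := gp; have [sg ig] := sim.
have bnd : forall C, C \in P -> (#|C| == 1) || (#|C| == 2).
  move=> C CP; have c2 := @clique_size _ _ _ sg ig tf (allP cl C CP).
  have : C != set0.
    move: part => /and3P [_ _ n0]; apply/eqP => C0; move: n0; rewrite inE -C0 CP.
    by [].
  rewrite -card_gt0; lia.
have all12 : all (fun C : {set T} => (#|C| == 1) || (#|C| == 2)) P by apply/allP.
have [sz sn sb sc] := @count12 _ P (count (fun C : {set T} => #|C| == 2) P) #|T| all12.
have nT : #|T| = \sum_(C <- P) #|C|.
  rewrite -sum1_card (@part_sum _ _ _ uP part); apply: eq_bigr => C _; exact: sum1_card.
have key : \sum_x \sum_y (g x y : nat) <=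
    \sum_(C <- P) (if #|C| == 1 then count (fun C : {set T} => #|C| == 2) P else #|T|).
  rewrite (@part_sum _ _ _ uP part) big_seq [X in _ <= X]big_seq; apply: leq_sum => C CP.
  case: ifP => c1.
    have [x Cx] := cards1P c1; rewrite Cx big_set1 (@part_sum _ _ _ uP part) -sc.
    rewrite big_seq [X in _ <= X]big_seq; apply: leq_sum => D DP.
    case/orP: (bnd D DP) => d.
      have [z Dz] := cards1P d; rewrite Dz big_set1.
      rewrite (@greedy_single _ _ _ [set x] [set z] x z sim gp) //.
      + by rewrite -Cx.
      + by rewrite -Dz.
      + exact: cards1.
      + exact: cards1.
      + exact: set11.
      + exact: set11.
    rewrite d; exact: (@clique_sum _ _ _ _ sg tf (allP cl D DP)).
  rewrite exchange_big /= -sum1_card; apply: leq_sum => y _.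
  rewrite (eq_bigr (fun x => (g y x : nat))); last by move=> x _; rewrite sg.
  exact: (@clique_sum _ _ _ _ sg tf (allP cl C CP)).
have := leq_trans (@edges_bound _ _ sim) key.
rewrite sb sz; move: sn; rewrite -nT => ->.
set a := count _ P; set b := count _ P => H.
have -> : a + 2 * b - (a + b) = b by lia.
nia.
Qed.
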